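(* Let $\Bbbk$ be a complete valuation field, $A$ a unital $\Bbbk$-Banach algebra and $a\in A$. Let $\tilde\Upsilon:\mathbb A^1_\Bbbk\to\mathbb A$ be the map $\gamma\mapsto\gamma\circ\Upsilon$, where $\Upsilon:\mathbb Z[t]\to\Bbbk[t]$ is the canonical ring homomorphism. Then $\tilde\Upsilon(\Sigma_A(a))=\sigma^{\mathrm{Ber}}_{A,\Bbbk}(a)$ and $\tilde\Upsilon(\Sigma^{\mathrm{um}}_A(a))=\sigma^{\mathrm{um}}_{A,\Bbbk}(a)$.
   Context: A unital $\Bbbk$-Banach algebra is a unital Banach ring $A$ ($\|1\|=1$, submultiplicative complete norm) with a contractive unital ring homomorphism from $\Bbbk$ into the center of $A$. $\mathbb A$ is the set of non-zero multiplicative semi-norms on $\mathbb Z[t]$; for a complete valuation field $K$ and $s\in K$, $\mu_K(s)\in\mathbb A$ is $p\mapsto|p(s)|_K$. $\mathbb A^1_\Bbbk$ is the set of multiplicative semi-norms $\gamma$ on $\Bbbk[t]$ with $\gamma(c)\le|c|_\Bbbk$ for $c\in\Bbbk$ (then $\gamma(c)=|c|_\Bbbk$), with pointwise convergence topology; for $\gamma\in\mathbb A^1_\Bbbk$, $\mathcal H(\gamma)$ is the completion of the fraction field of $\Bbbk[t]/\ker\gamma$ w.r.t. the absolute value induced by $\gamma$ (an extension of $\Bbbk$) and $\varphi_\gamma:\Bbbk[t]\to\mathcal H(\gamma)$ the canonical map. An extension of $\Bbbk$ is a complete valuation field $K$ with an isometric field embedding $\Bbbk\to K$. For a $\Bbbk$-Banach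 algebra $A$ and extension $K$, $A\hat\otimes_\Bbbk K$ and $A\hat\otimes^{\mathrm{um}}_\Bbbk K$ are the completions of $A\otimes_\Bbbk K$ modulo the kernels of $\|z\|_\wedge=\inf\sum\|a_k\||b_k|$ and $\|z\|^{\mathrm{um}}_\wedge=\inf\max\|a_k\||b_k|$ respectively (infima over representations $z=\sum a_k\otimes b_k$). Define $\Sigma_A(a):=\{\gamma\in\mathbb A^1_\Bbbk: 1\otimes\varphi_\gamma(t)-a\otimes1$ not invertible in $A\hat\otimes_\Bbbk\mathcal H(\gamma)\}$; $\Sigma^{\mathrm{um}}_A(a):=\{\gamma\in\mathbb A^1_\Bbbk: A\hat\otimes^{\mathrm{um}}_\Bbbk\mathcal H(\gamma)\ne(0)$ and $1\otimes\varphi_\gamma(t)-a\otimes1$ not invertible there$\}$; $\sigma^{\mathrm{Ber}}_{A,\Bbbk}(a):=\{\mu_K(s):K$ extension of $\Bbbk$, $s\in K$, $1\otimes s-a\otimes1$ not invertible in $A\hat\otimes_\Bbbk K\}$; $\sigma^{\mathrm{um}}_{A,\Bbbk}(a):=\{\mu_K(s):K$ extension of $\Bbbk$, $s\in K$, $A\hat\otimes^{\mathrm{um}}_\Bbbk K\ne(0)$, $1\otimes s-a\otimes1$ not invertible in $A\hat\otimes^{\mathrm{um}}_\Bbbk K\}$. *)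

(* Defs.v *)
From Stdlib Require Import Reals Relation_Operators.
From HB Require Import structures.
From mathcomp Require Import all_boot all_order all_algebra.
Set Implicit Arguments. Unset Strict Implicit. Unset Printing Implicit Defensive.
Import GRing.Theory.
Local Open Scope ring_scope.

Definition cauchy_seq {X : Type} (d : X -> X -> R) (u : nat -> X) : Prop :=
  forall e, Rlt R0 e -> exists N : nat, forall m n : nat, (N <= m)%N -> (N <= n)%N ->
    Rlt (d (u m) (u n)) e.
Definition converges_to {X : Type} (d : X -> X -> R) (u : nat -> X) (l : X) : Prop :=
  forall e, Rlt R0 e -> exists N : nat, forall n : nat, (N <= n)%N -> Rlt (d (u n) l) e.
Definition complete_for {X : Type} (d : X -> X -> R) : Prop :=
  forall u, cauchy_seq d u -> exists l, converges_to d u l.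

Record ValField := {
  vf_car :> fieldType;
  vf_abs : vf_car -> R;
  vf_abs_ge0 : forall x, Rle R0 (vf_abs x);
  vf_abs_eq0 : forall x, vf_abs x = R0 <-> x = 0;
  vf_absM : forall x y, vf_abs (x * y) = Rmult (vf_abs x) (vf_abs y);
  vf_absD : forall x y, Rle (vf_abs (x + y)) (Rplus (vf_abs x) (vf_abs y));
  vf_complete : complete_for (fun x y => vf_abs (x - y)) }.

Record Ext (k : ValField) := {
  ext_fld :> ValField;
  ext_emb : {rmorphism (vf_car k) -> (vf_car ext_fld)};
  ext_isom : forall c, @vf_abs ext_fld (ext_emb c) = @vf_abs k c }.

(* The k-algebra structure (algType) is a unital ring hom k -> center(A),
   c |-> c%:A; it is required to be contractive. *)
Record BanachAlg (k : ValField) := {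
  ba_car :> algType (vf_car k);
  ba_norm : ba_car -> R;
  ba_norm_ge0 : forall x, Rle R0 (ba_norm x);
  ba_norm_eq0 : forall x, ba_norm x = R0 <-> x = 0;
  ba_normN : forall x, ba_norm (- x) = ba_norm x;
  ba_normD : forall x y, Rle (ba_norm (x + y)) (Rplus (ba_norm x) (ba_norm y));
  ba_normM : forall x y, Rle (ba_norm (x * y)) (Rmult (ba_norm x) (ba_norm y));
  ba_norm1 : ba_norm 1 = R1;
  ba_contr : forall c : vf_car k, Rle (ba_norm (c%:A)) (@vf_abs k c);
  ba_complete : complete_for (fun x y => ba_norm (x - y)) }.

Section Tensor.
Variables (k : ValField) (A : BanachAlg k) (L : Ext k).

(* a formal sum  sum_i a_i (x) b_i  *)
Definition tens := seq (ba_car A * vf_car L).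

(* elementary relations generating the tensor product (over k, where k acts
   on K through the embedding) *)
Inductive tstep : tens -> tens -> Prop :=
| ts_addl (a1 a2 : ba_car A) (b : vf_car L) : tstep [:: (a1 + a2, b)] [:: (a1, b); (a2, b)]
| ts_addr (a : ba_car A) (b1 b2 : vf_car L) : tstep [:: (a, b1 + b2)] [:: (a, b1); (a, b2)]
| ts_scal (c : vf_car k) (a : ba_car A) (b : vf_car L) :
    tstep [:: (c *: a, b)] [:: (a, ext_emb L c * b)]
| ts_zero (b : vf_car L) : tstep [:: (0, b)] [::]
| ts_swap (x y : ba_car A * vf_car L) : tstep [:: x; y] [:: y; x].

Definition tcong (z w : tens) : Prop :=
  exists u v x y, tstep x y /\ z = u ++ x ++ v /\ w = u ++ y ++ v.

Definition teq : tens -> tens -> Prop := clos_refl_sym_trans tens tcong.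

Definition tsub (z w : tens) : tens := z ++ [seq (- p.1, p.2) | p <- w].
Definition tmul (z w : tens) : tens := [seq (p.1 * q.1, p.2 * q.2) | p <- z, q <- w].
Definition tone : tens := [:: (1, 1)].

Definition cost_sum (w : tens) : R :=
  foldr (fun p r => Rplus (Rmult (@ba_norm k A p.1) (@vf_abs L p.2)) r) R0 w.
Definition cost_max (w : tens) : R :=
  foldr (fun p r => Rmax (Rmult (@ba_norm k A p.1) (@vf_abs L p.2)) r) R0 w.

(* ||z|| < e for the seminorm  ||z|| = inf over representations of cost *)
Definition snorm_lt (cost : tens -> R) (z : tens) (e : R) : Prop :=
  exists w, teq w z /\ Rlt (cost w) e.

(* x (an element of A (x)_k K) is invertible in the completion of
   (A (x)_k K)/ker||.||: there is y in the completion, i.e. a Cauchy sequence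
   u_n in A (x)_k K, with x y = 1 = y x, i.e. ||x u_n - 1|| -> 0 and
   ||u_n x - 1|| -> 0. *)
Definition cinvertible (cost : tens -> R) (x : tens) : Prop :=
  exists u : nat -> tens,
    (forall e, Rlt R0 e -> exists N : nat, forall m n : nat, (N <= m)%N -> (N <= n)%N ->
        snorm_lt cost (tsub (u m) (u n)) e) /\
    (forall e, Rlt R0 e -> exists N : nat, forall n : nat, (N <= n)%N ->
        snorm_lt cost (tsub (tmul x (u n)) tone) e /\
        snorm_lt cost (tsub (tmul (u n) x) tone) e).

(* the completion is not the zero ring: some element has nonzero seminorm *)
Definition cnonzero (cost : tens -> R) : Prop :=
  exists z e, Rlt R0 e /\ ~ snorm_lt cost z e.

Definition res_elt (a : ba_car A) (s : vf_car L) : tens := [:: (1, s); (- a, 1)].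

End Tensor.

Definition mult_seminorm (Rg : nzRingType) (g : Rg -> R) : Prop :=
  (forall x, Rle R0 (g x)) /\ g 0 = R0 /\ (forall x, g (- x) = g x) /\
  (forall x y, Rle (g (x + y)) (Rplus (g x) (g y))) /\
  (forall x y, g (x * y) = Rmult (g x) (g y)).

Definition in_AA (f : {poly int} -> R) : Prop :=
  mult_seminorm f /\ exists p, f p <> R0.

Definition in_A1 (k : ValField) (g : {poly (vf_car k)} -> R) : Prop :=
  mult_seminorm g /\ forall c : vf_car k, Rle (g c%:P) (@vf_abs k c).

Definition mu (K : ValField) (s : vf_car K) : {poly int} -> R :=
  fun p => @vf_abs K (map_poly (fun z : int => z%:~R) p).[s].

Definition Upsilon (k : ValField) (p : {poly int}) : {poly (vf_car k)} :=
  map_poly (fun z : int => z%:~R) p.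
Definition Upsilon_tilde (k : ValField) (g : {poly (vf_car k)} -> R) : {poly int} -> R :=
  fun p => g (Upsilon k p).

(* (L, phi) is a model of (H(gamma), phi_gamma): L is an extension of k (complete),
   phi : k[t] -> L a ring hom extending k -> L with |phi p| = gamma p, whose
   induced image of Frac(k[t]/ker gamma) = {phi p / phi q} is dense in L. *)
Definition Hmodel (k : ValField) (g : {poly (vf_car k)} -> R) (L : Ext k)
    (phi : {rmorphism {poly (vf_car k)} -> vf_car L}) : Prop :=
  (forall c, phi c%:P = ext_emb L c) /\
  (forall p, @vf_abs L (phi p) = g p) /\
  (forall (x : vf_car L) e, Rlt R0 e -> exists p q,
      phi q <> 0 /\ Rlt (@vf_abs L (x - phi p / phi q)) e).

Definition Sigma (k : ValField) (A : BanachAlg k) (a : ba_car A)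
    (g : {poly (vf_car k)} -> R) : Prop :=
  in_A1 g /\ exists (L : Ext k) phi, @Hmodel k g L phi /\
    ~ cinvertible (@cost_sum k A L) (@res_elt k A L a (phi 'X)).

Definition Sigma_um (k : ValField) (A : BanachAlg k) (a : ba_car A)
    (g : {poly (vf_car k)} -> R) : Prop :=
  in_A1 g /\ exists (L : Ext k) phi, @Hmodel k g L phi /\
    cnonzero (@cost_max k A L) /\
    ~ cinvertible (@cost_max k A L) (@res_elt k A L a (phi 'X)).

Definition sigma_Ber (k : ValField) (A : BanachAlg k) (a : ba_car A)
    (f : {poly int} -> R) : Prop :=
  exists (K : Ext k) (s : vf_car K), f = @mu K s /\
    ~ cinvertible (@cost_sum k A K) (@res_elt k A K a s).

Definition sigma_um (k : ValField) (A : BanachAlg k) (a : ba_car A)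
    (f : {poly int} -> R) : Prop :=
  exists (K : Ext k) (s : vf_car K), f = @mu K s /\
    cnonzero (@cost_max k A K) /\
    ~ cinvertible (@cost_max k A K) (@res_elt k A K a s).

(* Main.v *)
Require Import Defs.
From Stdlib Require Import Reals Lra ClassicalEpsilon FunctionalExtensionality Classical Relation_Operators.
From HB Require Import structures.
From mathcomp Require Import all_boot all_order all_algebra.
Set Implicit Arguments. Unset Strict Implicit. Unset Printing Implicit Defensive.
Import GRing.Theory.
Section RealFacts.
Local Open Scope R_scope.
Lemma small_delta (c e : R) : 0 < e -> 0 <= c -> exists d, 0 < d /\ d <= 1 /\ d * (c + 1) <= e / 2.
Proof.
move=> he hc; exists (Rmin 1 (e / (2 * (c + 1)))); split; [|split].
- apply Rmin_glb_lt; [lra|]. apply Rdiv_lt_0_compat; lra.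
- apply Rmin_l.
- have h := Rmin_r 1 (e / (2 * (c + 1))).
  apply Rle_trans with ((e / (2 * (c + 1))) * (c + 1)).
  + apply Rmult_le_compat_r; lra.
  + right; field; lra.
Qed.
Lemma half_pos e : 0 < e -> 0 < e / 2. Proof. lra. Qed.
Lemma half_sum a b e : a < e / 2 -> b < e / 2 -> a + b < e. Proof. lra. Qed.
Lemma inv_delta r e : 0 < r -> 0 < e -> exists d, 0 < d /\ d + d <= r /\ d + d <= e * (r * r).
Proof.
move=> hr he; exists (Rmin (r / 2) (e * (r * r) / 2)); split; [|split].
- apply Rmin_glb_lt; [lra|]. apply Rdiv_lt_0_compat; [|lra]. apply Rmult_lt_0_compat; [lra|]. apply Rmult_lt_0_compat; lra.
- have := Rmin_l (r / 2) (e * (r * r) / 2); lra.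
- have := Rmin_r (r / 2) (e * (r * r) / 2); lra.
Qed.
Lemma inv_bound d e r t : 0 < r -> 0 < t -> d < e * (r * t) -> d * (/ r * / t) < e.
Proof.
move=> hr ht h; apply (Rmult_lt_reg_r (r * t)); first nra.
replace (d * (/ r * / t) * (r * t)) with d by (field; lra). exact h.
Qed.
End RealFacts.
From mathcomp Require Import ring.

Local Open Scope ring_scope.

Section Abs.
Variable K : ValField.
Implicit Types x y z : vf_car K.
Lemma abs0 : vf_abs (0 : vf_car K) = R0.
Proof. by apply/vf_abs_eq0. Qed.
Lemma abs_neq0 x : x != 0 -> vf_abs x <> R0.
Proof. by move=> /eqP hx /vf_abs_eq0. Qed.
Lemma abs1 : vf_abs (1 : vf_car K) = R1.
Proof.
have h := vf_absM (1 : vf_car K) 1; rewrite mulr1 in h.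
have nz := abs_neq0 (oner_neq0 (vf_car K)).
apply (Rmult_eq_reg_l (vf_abs (1 : vf_car K))) => //.
by rewrite Rmult_1_r -h.
Qed.
Lemma absN x : vf_abs (- x) = vf_abs x.
Proof.
have h := vf_absM (-1 : vf_car K) (-1); rewrite mulrNN mulr1 abs1 in h.
have h0 := vf_abs_ge0 (-1 : vf_car K).
have e1 : vf_abs (-1 : vf_car K) = R1 by nra.
by rewrite -mulN1r vf_absM e1 Rmult_1_l.
Qed.
Lemma abs_symB x y : vf_abs (x - y) = vf_abs (y - x).
Proof. by rewrite -absN opprB. Qed.
Lemma absV x : x != 0 -> vf_abs (x^-1) = Rinv (vf_abs x).
Proof.
move=> hx; have h := vf_absM x x^-1; rewrite mulfV // abs1 in h.
have nz := abs_neq0 hx.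
apply (Rmult_eq_reg_l (vf_abs x)) => //; rewrite -h Rinv_r //.
Qed.
Lemma abs_triB x y z : Rle (vf_abs (x - z)) (Rplus (vf_abs (x - y)) (vf_abs (y - z))).
Proof. have -> : x - z = (x - y) + (y - z) by rewrite addrA subrK. exact: vf_absD. Qed.
Lemma abs_tri x y : Rle (vf_abs x) (Rplus (vf_abs (x - y)) (vf_abs y)).
Proof. have := abs_triB x y 0; by rewrite !subr0. Qed.
End Abs.

Section Clo.
Variables (K : ValField) (D : vf_car K -> Prop).
Hypotheses (D1 : D 1) (DB : forall x y, D x -> D y -> D (x - y))
  (DM : forall x y, D x -> D y -> D (x * y)) (DV : forall x, D x -> x != 0 -> D x^-1).
Definition Cl (x : vf_car K) : Prop :=
  forall e, Rlt R0 e -> exists y, D y /\ Rlt (vf_abs (x - y)) e.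

Lemma ClD x : D x -> Cl x.
Proof. move=> hx e he; exists x; split => //; by rewrite subrr abs0. Qed.

Lemma ClB x y : Cl x -> Cl y -> Cl (x - y).
Proof.
move=> hx hy e he.
have he2 := half_pos he.
have [x' [Dx hx']] := hx _ he2; have [y' [Dy hy']] := hy _ he2.
exists (x' - y'); split; first exact: DB.
have -> : x - y - (x' - y') = (x - x') + - (y - y').
  by ring.
apply: Rle_lt_trans; first exact: vf_absD.
rewrite absN; exact: half_sum.
Qed.

Lemma Cl0 : Cl 0.
Proof. have h := ClB (ClD D1) (ClD D1). by rewrite subrr in h. Qed.

Lemma ClM x y : Cl x -> Cl y -> Cl (x * y).
Proof.
move=> hx hy e he.
set a := vf_abs x; set b := vf_abs y.
have ha : Rle R0 a by apply: vf_abs_ge0.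
have hb : Rle R0 b by apply: vf_abs_ge0.
have [d [hd [hd1 hde]]] := small_delta (c := Rplus a b) he (Rplus_le_le_0_compat _ _ ha hb).
have [x' [Dx hx']] := hx _ hd; have [y' [Dy hy']] := hy _ hd.
exists (x' * y'); split; first exact: DM.
have -> : x * y - x' * y' = x * (y - y') + (x - x') * y'.
  by ring.
apply: Rle_lt_trans; first exact: vf_absD.
rewrite !vf_absM.
have hy'b := abs_tri y' y. rewrite abs_symB in hy'b.
have h1 := vf_abs_ge0 (y - y'). have h2 := vf_abs_ge0 (x - x').
have h3 := vf_abs_ge0 y'.
fold b in hy'b. fold a.
set D2 := vf_abs (y - y') in hy' hy'b h1 *.
set E1 := vf_abs (x - x') in hx' h2 *.
set Y := vf_abs y' in hy'b h3 *.
have k1 : Rle (Rmult a D2) (Rmult a d) by apply Rmult_le_compat_l; lra.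
have k2 : Rle (Rmult E1 Y) (Rmult d Y) by apply Rmult_le_compat_r; lra.
have k3 : Rle (Rmult d Y) (Rmult d (Rplus b R1)) by apply Rmult_le_compat_l; lra.
lra.
Qed.

Lemma ClV x : Cl x -> x != 0 -> Cl x^-1.
Proof.
move=> hx nx e he.
set r := vf_abs x.
have hr : Rlt R0 r by have := vf_abs_ge0 x; have := abs_neq0 nx; rewrite /r; lra.
have [dd [hd [h1 h2]]] := inv_delta hr he.
have [y [Dy hy]] := hx _ hd.
have hyx := abs_tri x y; fold r in hyx.
have hyr : Rle r (Rplus (vf_abs y) (vf_abs y)) by lra.
have ny : y != 0.
  apply/eqP => y0; rewrite y0 abs0 in hyr; lra.
exists y^-1; split; first exact: DV.
have -> : x^-1 - y^-1 = (y - x) * (x^-1 * y^-1).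
  by rewrite mulrBl mulrCA mulfV // mulr1 mulrA mulfV // mul1r.
rewrite vf_absM vf_absM absV // absV // abs_symB -/r.
set t := vf_abs y in hyr *.
set d := vf_abs (x - y) in hy hyx *.
have ht : Rlt R0 t by lra.
have hdd : Rlt d (Rmult e (Rmult r t)) by nra.
exact: inv_bound.
Qed.

Lemma Cl_lim (u : nat -> vf_car K) l : (forall n, Cl (u n)) ->
  converges_to (fun x y => vf_abs (x - y)) u l -> Cl l.
Proof.
move=> hu hl e he; have he2 := half_pos he.
have [N hN] := hl _ he2.
have [y [Dy hy]] := hu N _ he2.
exists y; split => //.
apply: Rle_lt_trans; first exact: (abs_triB l (u N) y).
rewrite abs_symB; apply: half_sum => //; exact: hN.
Qed.
End Clo.
Section SubF.
Variables (F : fieldType) (S : divringClosed F).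
Record B := mkB { vB : F; vBP : vB \in S }.
HB.instance Definition _ := [isSub for vB].
HB.instance Definition _ := [Choice of B by <:].
HB.instance Definition _ := [SubChoice_isSubUnitRing of B by <:].
HB.instance Definition _ := [SubNzRing_isSubComNzRing of B by <:].
HB.instance Definition _ := [SubComUnitRing_isSubIntegralDomain of B by <:].
HB.instance Definition _ := [SubIntegralDomain_isSubField of B by <:].
End SubF.

Section Build.
Variables (k : ValField) (K : Ext k) (s : vf_car K).
Definition phi0 : {rmorphism {poly (vf_car k)} -> vf_car K} :=
  horner_eval s \o map_poly (ext_emb K).
Lemma phi0C c : phi0 c%:P = ext_emb K c.
Proof. by rewrite /= horner_evalE map_polyC hornerC. Qed.
Lemma phi0X : phi0 'X = s.
Proof. by rewrite /= horner_evalE map_polyX hornerX. Qed.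

Definition Dfr (y : vf_car K) : Prop :=
  exists p q, phi0 q != 0 /\ y = phi0 p / phi0 q.
Lemma Dfr_phi p : Dfr (phi0 p).
Proof. exists p, 1; by rewrite rmorph1 oner_neq0 divr1. Qed.
Lemma Dfr1 : Dfr 1.
Proof. by have := Dfr_phi 1; rewrite rmorph1. Qed.
Lemma DfrB x y : Dfr x -> Dfr y -> Dfr (x - y).
Proof.
move=> [p1 [q1 [h1 ->]]] [p2 [q2 [h2 ->]]].
exists (p1 * q2 - p2 * q1), (q1 * q2); rewrite !rmorphB !rmorphM mulf_neq0 //; split => //.
by field; apply/andP; split.
Qed.
Lemma DfrM x y : Dfr x -> Dfr y -> Dfr (x * y).
Proof.
move=> [p1 [q1 [h1 ->]]] [p2 [q2 [h2 ->]]].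
exists (p1 * p2), (q1 * q2); rewrite !rmorphM mulf_neq0 //; split => //.
by field; apply/andP; split.
Qed.
Lemma DfrV x : Dfr x -> x != 0 -> Dfr x^-1.
Proof.
move=> [p [q [h ->]]] nz; exists q, p; split; last by rewrite invf_div.
apply: contraNneq nz => ->; by rewrite mul0r.
Qed.

Definition ClK := Cl Dfr.
Definition Pb : {pred vf_car K} :=
  fun x => if excluded_middle_informative (ClK x) then true else false.
Lemma PbE x : (x \in Pb) <-> ClK x.
Proof.
rewrite unfold_in /Pb; case: excluded_middle_informative => //.
Qed.
Lemma Pb_closed : divring_closed Pb.
Proof.
split.
- apply/PbE; exact: ClD Dfr1.
- move=> x y /PbE hx /PbE hy; apply/PbE; apply: (ClB (D:=Dfr)); [exact: DfrB|exact: hx|exact: hy].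
- move=> x y /PbE hx /PbE hy; apply/PbE.
  have [->|ny] := eqVneq y 0.
    rewrite invr0 mulr0; apply: (Cl0 (D:=Dfr)); [exact: Dfr1|exact: DfrB].
  apply: (ClM (D:=Dfr)) => //; first exact: DfrM.
  apply: (ClV (D:=Dfr)) => //; first [exact: DfrM|exact: DfrV|exact: DfrB|exact: Dfr1|idtac].
Qed.
HB.instance Definition _ := GRing.isDivringClosed.Build (vf_car K) Pb Pb_closed.
Definition Lt : fieldType := B Pb.

Lemma Pb_phi p : phi0 p \in Pb.
Proof. apply/PbE; apply: ClD; exact: Dfr_phi. Qed.

Definition absL (x : Lt) : R := vf_abs (val x).

Lemma absL_ge0 x : Rle R0 (absL x). Proof. exact: vf_abs_ge0. Qed.
Lemma absL_eq0 x : absL x = R0 <-> x = 0.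
Proof.
rewrite /absL; split.
- by move/vf_abs_eq0 => h; apply: val_inj; rewrite h rmorph0.
- by move=> ->; rewrite rmorph0; apply/vf_abs_eq0.
Qed.
Lemma absL_M x y : absL (x * y) = Rmult (absL x) (absL y).
Proof. by rewrite /absL rmorphM vf_absM. Qed.
Lemma absL_D x y : Rle (absL (x + y)) (Rplus (absL x) (absL y)).
Proof. rewrite /absL rmorphD; exact: vf_absD. Qed.
Lemma absL_complete : complete_for (fun x y => absL (x - y)).
Proof.
move=> u hu.
have hu' : cauchy_seq (fun x y => vf_abs (x - y)) (fun n => val (u n)).
  move=> e he; have [N hN] := hu e he; exists N => m n hm hn.
  by have := hN m n hm hn; rewrite /absL rmorphB.
have [l hl] := vf_complete hu'.
have lP : l \in Pb.
  apply/PbE; apply: (Cl_lim (u := fun n => val (u n))) => //.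
  by move=> n; apply/PbE; exact: (valP (u n)).
exists (mkB lP : Lt) => e he; have [N hN] := hl e he; exists N => n hn.
by rewrite /absL rmorphB /=; apply: hN.
Qed.

Definition Lvf : ValField :=
  {| vf_car := Lt; vf_abs := absL; vf_abs_ge0 := absL_ge0; vf_abs_eq0 := absL_eq0;
     vf_absM := absL_M; vf_absD := absL_D; vf_complete := absL_complete |}.

Definition phiL (p : {poly (vf_car k)}) : Lt := mkB (Pb_phi p).
Lemma phiL_val p : val (phiL p) = phi0 p. Proof. by []. Qed.
Lemma phiL_B : zmod_morphism phiL.
Proof. move=> x y; apply: val_inj; rewrite rmorphB /=; exact: (rmorphB phi0 x y). Qed.
Lemma phiL_M : monoid_morphism phiL.
Proof.
split; first by apply: val_inj; rewrite rmorph1 /=; exact: (rmorph1 phi0).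
by move=> x y; apply: val_inj; rewrite rmorphM /=; exact: (rmorphM phi0 x y).
Qed.
HB.instance Definition _ := GRing.isZmodMorphism.Build _ _ phiL phiL_B.
HB.instance Definition _ := GRing.isMonoidMorphism.Build _ _ phiL phiL_M.
Definition embL : {rmorphism vf_car k -> vf_car Lvf} := phiL \o polyC.
Lemma embL_isom c : vf_abs (embL c) = vf_abs c.
Proof. by rewrite /= /absL phiL_val phi0C ext_isom. Qed.
Definition Lext : Ext k := {| ext_fld := Lvf; ext_emb := embL; ext_isom := embL_isom |}.
End Build.
Section Transfer.
Variables (k : ValField) (A : BanachAlg k) (L K : Ext k).
Variable f : {rmorphism vf_car L -> vf_car K}.
Hypothesis f_emb : forall c, f (ext_emb L c) = ext_emb K c.
Hypothesis f_abs : forall x, vf_abs (f x) = vf_abs x.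

Definition tm (w : tens A L) : tens A K := [seq (p.1, f p.2) | p <- w].

Lemma tstep_tm x y : tstep x y -> tstep (tm x) (tm y).
Proof.
case => [a1 a2 b|a b1 b2|c a b|b|x1 y1] /=.
- exact: ts_addl.
- rewrite rmorphD; exact: ts_addr.
- rewrite rmorphM f_emb; exact: ts_scal.
- exact: ts_zero.
- exact: ts_swap.
Qed.

Lemma teq_tm z w : teq z w -> teq (tm z) (tm w).
Proof.
elim => [x y [u [v [x' [y' [hs [-> ->]]]]]]| x | x y _ IH | x y z' _ IH1 _ IH2].
- apply: rst_step; exists (tm u), (tm v), (tm x'), (tm y'); split; first exact: tstep_tm.
  by rewrite /tm !map_cat.
- exact: rst_refl.
- exact: rst_sym.
- exact: rst_trans IH1 IH2.
Qed.

Lemma cost_sum_tm w : cost_sum (tm w) = cost_sum w.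
Proof. elim: w => //= p w IH; by rewrite IH f_abs. Qed.
Lemma cost_max_tm w : cost_max (tm w) = cost_max w.
Proof. elim: w => //= p w IH; by rewrite IH f_abs. Qed.

Lemma tsub_tm z w : tm (tsub z w) = tsub (tm z) (tm w).
Proof. by rewrite /tsub /tm map_cat -!map_comp. Qed.
Lemma tmul_tm z w : tm (tmul z w) = tmul (tm z) (tm w).
Proof.
rewrite /tmul /tm; elim: z => //= p z IH.
rewrite map_cat IH -!map_comp; congr (_ ++ _); apply: eq_map => q /=.
by rewrite rmorphM.
Qed.
Lemma tone_tm : tm (tone A L) = tone A K.
Proof. by rewrite /tm /tone /= rmorph1. Qed.
Lemma res_tm a x : tm (res_elt a x) = res_elt a (f x).
Proof. by rewrite /tm /res_elt /= rmorph1. Qed.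

Variables (costL : tens A L -> R) (costK : tens A K -> R).
Hypothesis cost_tm : forall w, costK (tm w) = costL w.

Lemma snorm_tm z e : snorm_lt costL z e -> snorm_lt costK (tm z) e.
Proof. move=> [w [hw he]]; exists (tm w); split; [exact: teq_tm | by rewrite cost_tm]. Qed.

Lemma cinv_tm x : cinvertible costL x -> cinvertible costK (tm x).
Proof.
move=> [u [hc hi]]; exists (fun n => tm (u n)); split.
- move=> e he; have [N hN] := hc e he; exists N => m n hm hn.
  rewrite -tsub_tm; exact: snorm_tm (hN m n hm hn).
- move=> e he; have [N hN] := hi e he; exists N => n hn.
  have [h1 h2] := hN n hn.
  by rewrite -tmul_tm -tone_tm -tsub_tm -tmul_tm -tsub_tm; split; apply: snorm_tm.
Qed.
End Transfer.

Lemma noninv_nonzero (k : ValField) (A : BanachAlg k) (K : Ext k) (cost : tens A K -> R) x :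
  ~ cinvertible cost x -> cnonzero cost.
Proof.
move=> hni; apply: NNPP => hz; apply: hni.
have all : forall z e, Rlt R0 e -> snorm_lt cost z e.
  move=> z e he; apply: NNPP => hn; apply: hz; by exists z, e.
exists (fun _ => [::]); split.
- move=> e he; exists 0%N => m n _ _; exact: all.
- move=> e he; exists 0%N => n _; split; exact: all.
Qed.

Lemma phi_int (k : ValField) (L : fieldType) (phi : {rmorphism {poly (vf_car k)} -> L}) (p : {poly int}) :
  phi (map_poly (fun z : int => z%:~R) p) = (map_poly (fun z : int => z%:~R) p).[phi 'X].
Proof.
elim/poly_ind: p => [|p c IH]; first by rewrite !rmorph0 horner0.
rewrite !(rmorphD, rmorphM) /= !map_polyX !map_polyC /= hornerMXaddC IH.
by rewrite (rmorph_int (polyC : {rmorphism vf_car k -> {poly (vf_car k)}})) rmorph_int.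
Qed.
Section Main.
Variables (k : ValField) (K : Ext k) (s : vf_car K).
Definition gK (p : {poly (vf_car k)}) : R := vf_abs (phi0 s p).

Lemma gK_A1 : in_A1 gK.
Proof.
split; last by move=> c; rewrite /gK phi0C ext_isom; apply: Rle_refl.
rewrite /gK; split; [|split; [|split; [|split]]].
- move=> x; exact: vf_abs_ge0.
- by rewrite rmorph0 abs0.
- by move=> x; rewrite rmorphN absN.
- by move=> x y; rewrite rmorphD; apply: vf_absD.
- by move=> x y; rewrite rmorphM vf_absM.
Qed.

Lemma gK_model : @Hmodel k gK (Lext s) (phiL s).
Proof.
split; first by [].
split; first by [].
move=> x e he.
have /PbE hx := valP x.
have [y [[p [q [hq ->]]] hy]] := hx e he.
exists p, q; split.
- move=> h; have := congr1 val h; rewrite rmorph0 /=; apply/eqP; exact: hq.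
- rewrite /= /absL rmorphB fmorph_div /=; exact: hy.
Qed.

Lemma gK_ups : Upsilon_tilde gK = mu s.
Proof.
apply: functional_extensionality => p.
by rewrite /Upsilon_tilde /gK /mu /Upsilon phi_int phi0X.
Qed.

Lemma val_emb c : (val : {rmorphism vf_car (Lext s) -> vf_car K}) (ext_emb (Lext s) c) = ext_emb K c.
Proof. exact: phi0C. Qed.

Lemma gK_res (A : BanachAlg k) (a : ba_car A) :
  tm (val : {rmorphism vf_car (Lext s) -> vf_car K}) (res_elt (L:=Lext s) a (phiL s 'X)) = res_elt a s.
Proof. by rewrite res_tm /= horner_evalE map_polyX hornerX. Qed.
End Main.
Unset Implicit Arguments.
Theorem lemma4p12 (k : ValField) (A : BanachAlg k) (a : ba_car A) :
  (forall f : {poly int} -> R,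
     (exists g, @Sigma k A a g /\ f = @Upsilon_tilde k g) <-> @sigma_Ber k A a f) /\
  (forall f : {poly int} -> R,
     (exists g, @Sigma_um k A a g /\ f = @Upsilon_tilde k g) <-> @sigma_um k A a f).
Proof.
split => f; split.
- move=> [g [[gA [L [phi [[hC [habs hd]] hni]]]] ->]].
  exists L, (phi 'X); split => //.
  apply: functional_extensionality => p.
  by rewrite /Upsilon_tilde /mu /Upsilon -habs phi_int.
- move=> [K [s [-> hni]]].
  exists (gK s); split; last by rewrite gK_ups.
  split; first exact: gK_A1.
  exists (Lext s), (phiL s); split; first exact: gK_model.
  move=> hinv; apply: hni; rewrite -(gK_res s).
  apply: (cinv_tm (val_emb s)) hinv => //.
  by move=> w; apply: cost_sum_tm.
- move=> [g [[gA [L [phi [[hC [habs hd]] [hnz hni]]]]] ->]].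
  exists L, (phi 'X); split => //.
  apply: functional_extensionality => p.
  by rewrite /Upsilon_tilde /mu /Upsilon -habs phi_int.
- move=> [K [s [-> [_ hni]]]].
  exists (gK s); split; last by rewrite gK_ups.
  split; first exact: gK_A1.
  exists (Lext s), (phiL s); split; first exact: gK_model.
  have hni' : ~ cinvertible (cost_max (A:=A) (L:=Lext s)) (res_elt (L:=Lext s) a (phiL s 'X)).
    move=> hinv; apply: hni; rewrite -(gK_res s).
    apply: (cinv_tm (val_emb s)) hinv => //.
    by move=> w; apply: cost_max_tm.
  split => //; exact: noninv_nonzero hni'.
Qed.
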